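(* Let $F=\begin{pmatrix}-1&-1&-1\\-1&8&-1\\-1&-1&-1\end{pmatrix}$ (edge detect C filter). Then for all $m,n\in\mathbb{N}$, it is not the case that the equation $F*X=B$ with the periodic boundary condition, for unknown $X\in\mathbb{R}^{m\times n}$, has a unique solution for every $B\in\mathbb{R}^{m\times n}$.
   Context: For $F=[f_{ij}]\in\mathbb{R}^{3\times3}$ and $X=[x_{ij}]\in\mathbb{R}^{m\times n}$, the convolution $F*X\in\mathbb{R}^{m\times n}$ is defined by $[F*X]_{ij}=\sum_{l_1=1}^3\sum_{l_2=1}^3 f_{l_1l_2}\,x_{i-l_1+2,\,j-l_2+2}$ for $1\le i\le m$, $1\le j\le n$, where the periodic boundary condition sets $x_{0j}=x_{mj}$, $x_{m+1,j}=x_{1j}$, $x_{i0}=x_{in}$, $x_{i,n+1}=x_{i1}$ (for all indices $i\in\{0,\dots,m+1\}$, $j\in\{0,\dots,n+1\}$, so corners are also determined, e.g. $x_{00}=x_{mn}$). *)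

(* Defs.v *)
From HB Require Import structures.
From mathcomp Require Import all_boot all_order all_algebra.
Set Implicit Arguments. Unset Strict Implicit. Unset Printing Implicit Defensive.
Import Order.TTheory GRing.Theory Num.Theory.
Local Open Scope ring_scope.

(* Periodic index: for 0-based i : 'I_m and 0-based offset l : 'I_3, the
   0-based index (i - l + 1) mod m.  This is the 1-based index i - l1 + 2
   of the paper, wrapped periodically. *)
Definition pidx (m : nat) (i : 'I_m) (l : 'I_3) : 'I_m :=
  Ordinal (ltn_pmod (i + m + 1 - l)%N (leq_ltn_trans (leq0n i) (ltn_ord i))).

Definition conv (R : pzRingType) (m n : nat) (F : 'M[R]_3) (X : 'M[R]_(m, n))
  : 'M[R]_(m, n) :=
  \matrix_(i < m, j < n) \sum_(l1 < 3) \sum_(l2 < 3) F l1 l2 * X (pidx i l1) (pidx j l2).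

Definition edgeC (R : pzRingType) : 'M[R]_3 :=
  \matrix_(i < 3, j < 3) (if (i == 1 :> nat) && (j == 1 :> nat) then 8%:R else -1).

(* Main.v *)
Require Import Defs.
From HB Require Import structures.
From mathcomp Require Import all_boot all_order all_algebra.
From mathcomp Require Import ring.
Import GRing.Theory Num.Theory.
Local Open Scope ring_scope.

Theorem corollary14 (R : realFieldType) (m n : nat) (hm : (0 < m)%N) (hn : (0 < n)%N) :
  ~ (forall B : 'M[R]_(m, n), exists! X : 'M[R]_(m, n), conv (edgeC R) X = B).
Proof.
move=> /(_ 0) [X [_ HX]].
have H0 : conv (edgeC R) (0 : 'M[R]_(m, n)) = 0.
  apply/matrixP => i j; rewrite !mxE; apply: big1 => a _; apply: big1 => b _.
  by rewrite !mxE mulr0.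
have H1 : conv (edgeC R) (const_mx 1 : 'M[R]_(m, n)) = 0.
  apply/matrixP => i j; rewrite !mxE.
  rewrite !big_ord_recr !big_ord0 /= !mxE /= !mulr1.
  ring.
have E0 := HX _ H0; have E1 := HX _ H1.
have : (0 : 'M[R]_(m, n)) = const_mx 1 by rewrite -E0 -E1.
move/matrixP => /(_ (Ordinal hm) (Ordinal hn)); rewrite !mxE => /eqP.
by rewrite eq_sym oner_eq0.
Qed.
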